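(* Consider a finite population of $C$ clusters, where cluster $c\in\{1,\dots,C\}$ contains $N_c$ units, with fixed potential outcomes $Y_{ci}(1),Y_{ci}(0)$ for unit $i\in\{1,\dots,N_c\}$ of cluster $c$. Let $N=\sum_{c=1}^C N_c$, $\bar N=N/C$, and define the scaled quantities $\widetilde Y_{ci}(d)=Y_{ci}(d)/\bar N$, $\widetilde Y_c(d)=\sum_{i=1}^{N_c}\widetilde Y_{ci}(d)$, $\bar{\widetilde Y}_c(d)=\widetilde Y_c(d)/N_c$, $\bar Y(d)=\frac1C\sum_{c=1}^C\widetilde Y_c(d)$ for $d\in\{0,1\}$, $\tau_c=\widetilde Y_c(1)-\widetilde Y_c(0)$, and $$\tau=\frac1N\sum_{c=1}^C\sum_{i=1}^{N_c}\big(Y_{ci}(1)-Y_{ci}(0)\big)=\frac1C\sum_{c=1}^C\tau_c .$$ The random design is as follows: $S$ of the $C$ clusters are drawn by simple random sampling without replacement ($R_c=1$ if cluster $c$ is drawn); independently of this, $S_1$ of the $S$ drawn clusters are assigned to treatment by complete randomization without replacement ($D_c=1$ treated, $D_c=0$ control; $S_0=S-S_1$); and, independently of both, within each cluster $c$ a simple random sample without replacement of $n_c$ of its $N_c$ units is drawn ($R_{i\mid c}=1$ if unit $i$ of cluster $c$ is drawn). Let $p=S/C$, $q=S_1/S$, $\pi_c=n_c/N_c$, $\tilde\pi_c=(n_c-1)/(N_c-1)$, and observed outcome $Y_{ci}=D_cY_{ci}(1)+(1-D_c)Y_{ci}(0)$ with $\widetilde Y_c=D_c\widetilde Y_c(1)+(1-D_c)\widetilde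 Y_c(0)$. Define $$\bar\tau=\frac1C\sum_{c=1}^C\Big[\frac{R_cD_c\widetilde Y_c}{pq}-\frac{R_c(1-D_c)\widetilde Y_c}{p(1-q)}\Big],\qquad \widehat\tau=\frac1N\sum_{c=1}^C\Big[\frac{R_cD_c}{pq}\sum_{i=1}^{N_c}\frac{R_{i\mid c}Y_{ci}}{\pi_c}-\frac{R_c(1-D_c)}{p(1-q)}\sum_{i=1}^{N_c}\frac{R_{i\mid c}Y_{ci}}{\pi_c}\Big].$$ Suppose $p\in(0,1]$ and $q\in(0,1)$. Then $\mathbb E[\bar\tau]=\tau$ and $\mathbb E[\widehat\tau]=\tau$, and $$\mathrm{Var}(\bar\tau)=\frac1C\Big\{\frac{\frac{1}{C-1}\sum_{c=1}^C(\widetilde Y_c(1)-\bar Y(1))^2}{pq}+\frac{\frac{1}{C-1}\sum_{c=1}^C(\widetilde Y_c(0)-\bar Y(0))^2}{p(1-q)}-\frac{1}{C-1}\sum_{c=1}^C(\tau_c-\tau)^2\Big\}.$$ Moreover, if $\pi_c\in(0,1]$ for all $c$, then $$\mathrm{Var}(\widehat\tau)=\mathrm{Var}(\bar\tau)+\frac{1}{C^2}\sum_{c=1}^C\frac{(1-\pi_c)(1-\tilde\pi_c)}{\pi_c(\pi_c-\tilde\pi_c)}\Big(\frac{\frac{1}{N_c-1}\sum_{i=1}^{N_c}(\widetilde Y_{ci}(1)-\bar{\widetilde Y}_c(1))^2}{pq}+\frac{\frac{1}{N_c-1}\sum_{i=1}^{N_c}(\widetilde Y_{ci}(0)-\bar{\widetilde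 Y}_c(0))^2}{p(1-q)}\Big),$$ where $\mathrm{Var}(\bar\tau)$ denotes the expression displayed above.
   Context: All expectations and variances are taken over the randomness of the design (cluster sampling, treatment assignment, within-cluster unit sampling); potential outcomes, $C$, $N_c$, $n_c$, $S$, $S_1$ are fixed and known. Sampling indicators $R_{i\mid c}$ may be regarded as defined for every cluster (only those with $R_c=1$ are observed). *)

(* Defs.v *)
From HB Require Import structures.
From mathcomp Require Import all_boot all_order all_algebra.
Set Implicit Arguments. Unset Strict Implicit. Unset Printing Implicit Defensive.
Import Order.TTheory GRing.Theory Num.Theory.
Local Open Scope ring_scope.

Section Design.
Variable R : realFieldType.
Variable C : nat.
Variable N : 'I_C -> nat.

Definition unit_t := {c : 'I_C & 'I_(N c)}.
Definition unit_of (c : 'I_C) (i : 'I_(N c)) : unit_t := Tagged (fun c => 'I_(N c)) i.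

(* an outcome of the design: (sampled clusters R, treated clusters D, sampled units W) *)
Definition outcome := ({set 'I_C} * {set 'I_C} * {set unit_t})%type.
Definition Rset (w : outcome) := w.1.1.
Definition Dset (w : outcome) := w.1.2.
Definition Wset (w : outcome) := w.2.

(* support of the design: SRS of S clusters; complete randomization of S1 of
   the S drawn clusters to treatment; independently, in every cluster c an
   SRS of n_c of its N_c units.  The design is the uniform distribution on it
   (equivalently the product of the three independent uniform designs). *)
Definition design (S S1 : nat) (n : 'I_C -> nat) : {set outcome} :=
  [set w : outcome | [&& #|Rset w| == S, Dset w \subset Rset w, #|Dset w| == S1
     & [forall c : 'I_C, #|[set u in Wset w | tag u == c]| == n c]]].

Definition Exp (S S1 : nat) (n : 'I_C -> nat) (X : outcome -> R) : R :=
  (\sum_(w in design S S1 n) X w) / #|design S S1 n|%:R.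

Definition Var (S S1 : nat) (n : 'I_C -> nat) (X : outcome -> R) : R :=
  Exp S S1 n (fun w => (X w - Exp S S1 n X) ^+ 2).

Definition ind (b : bool) : R := (b : nat)%:R.

Definition Ntot : R := \sum_(c < C) (N c)%:R.
Definition Nbar : R := Ntot / C%:R.
Definition Yt (Y : forall c : 'I_C, 'I_(N c) -> R) (c : 'I_C) (i : 'I_(N c)) : R := Y c i / Nbar.
Definition YtC (Y : forall c : 'I_C, 'I_(N c) -> R) (c : 'I_C) : R := \sum_(i < N c) @Yt Y c i.
Definition YtCbar (Y : forall c : 'I_C, 'I_(N c) -> R) (c : 'I_C) : R := YtC Y c / (N c)%:R.
Definition Ybar (Y : forall c : 'I_C, 'I_(N c) -> R) : R := (\sum_(c < C) YtC Y c) / C%:R.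
Definition tau_c (Y1 Y0 : forall c : 'I_C, 'I_(N c) -> R) (c : 'I_C) : R := YtC Y1 c - YtC Y0 c.
Definition tau (Y1 Y0 : forall c : 'I_C, 'I_(N c) -> R) : R :=
  Ntot^-1 * \sum_(c < C) \sum_(i < N c) (Y1 c i - Y0 c i).

Definition p_ (S : nat) : R := S%:R / C%:R.
Definition q_ (S S1 : nat) : R := S1%:R / S%:R.
Definition pi_ (n : 'I_C -> nat) (c : 'I_C) : R := (n c)%:R / (N c)%:R.
Definition pit_ (n : 'I_C -> nat) (c : 'I_C) : R := ((n c)%:R - 1) / ((N c)%:R - 1).

Definition taubar (S S1 : nat) (Y1 Y0 : forall c : 'I_C, 'I_(N c) -> R) (w : outcome) : R :=
  C%:R^-1 * \sum_(c < C)
    (let Rc := ind (c \in Rset w) in let Dc := ind (c \in Dset w) in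
     let Ytc := Dc * YtC Y1 c + (1 - Dc) * YtC Y0 c in
     Rc * Dc * Ytc / (p_ S * q_ S S1) - Rc * (1 - Dc) * Ytc / (p_ S * (1 - q_ S S1))).

Definition tauhat (S S1 : nat) (n : 'I_C -> nat) (Y1 Y0 : forall c : 'I_C, 'I_(N c) -> R)
    (w : outcome) : R :=
  Ntot^-1 * \sum_(c < C)
    (let Rc := ind (c \in Rset w) in let Dc := ind (c \in Dset w) in
     let Ysum := \sum_(i < N c)
        ind (unit_of i \in Wset w) * (Dc * Y1 c i + (1 - Dc) * Y0 c i) / pi_ n c in
     Rc * Dc / (p_ S * q_ S S1) * Ysum - Rc * (1 - Dc) / (p_ S * (1 - q_ S S1)) * Ysum).

Definition var_taubar_formula (S S1 : nat) (Y1 Y0 : forall c : 'I_C, 'I_(N c) -> R) : R :=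
  C%:R^-1 * (
    ((C%:R - 1)^-1 * \sum_(c < C) (YtC Y1 c - Ybar Y1) ^+ 2) / (p_ S * q_ S S1)
  + ((C%:R - 1)^-1 * \sum_(c < C) (YtC Y0 c - Ybar Y0) ^+ 2) / (p_ S * (1 - q_ S S1))
  - (C%:R - 1)^-1 * \sum_(c < C) (tau_c Y1 Y0 c - tau Y1 Y0) ^+ 2).

Definition within_term (S S1 : nat) (n : 'I_C -> nat) (Y1 Y0 : forall c : 'I_C, 'I_(N c) -> R) : R :=
  (C%:R ^+ 2)^-1 * \sum_(c < C)
    ((1 - pi_ n c) * (1 - pit_ n c) / (pi_ n c * (pi_ n c - pit_ n c)) *
     ( (((N c)%:R - 1)^-1 * \sum_(i < N c) (@Yt Y1 c i - YtCbar Y1 c) ^+ 2) / (p_ S * q_ S S1)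
     + (((N c)%:R - 1)^-1 * \sum_(i < N c) (@Yt Y0 c i - YtCbar Y0 c) ^+ 2) / (p_ S * (1 - q_ S S1)))).

End Design.

(* Main.v *)
Require Import Defs.
From mathcomp Require Import all_boot all_order all_algebra.
From mathcomp Require Import perm.
From mathcomp Require Import ring lra zify.
Set Implicit Arguments. Unset Strict Implicit. Unset Printing Implicit Defensive.
Import Order.TTheory GRing.Theory Num.Theory.
Local Open Scope ring_scope.

Lemma ind_sum (R : realFieldType) (T : finType) (A : {pred T}) :
  \sum_t ind R (t \in A) = #|A|%:R.
Proof.
rewrite -sum1_card natr_sum [RHS]big_mkcond /=; apply: eq_bigr => t _.
by rewrite /ind; case: (t \in A).
Qed.

Lemma sum_invol (R : realFieldType) (X : finType) (P : pred X) (h : X -> X) (F G : X -> R) :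
  involutive h -> (forall x, P (h x) = P x) -> (forall x, P x -> F (h x) = G x) ->
  \sum_(x | P x) F x = \sum_(x | P x) G x.
Proof.
move=> hK hP hFG; rewrite (reindex_inj (inv_inj hK)) /=.
by apply: eq_big => x; rewrite ?hP // => Px; apply: hFG.
Qed.

Definition Aset (C S S1 : nat) : {set ({set 'I_C} * {set 'I_C})} :=
  [set x : {set 'I_C} * {set 'I_C} | [&& #|x.1| == S, x.2 \subset x.1 & #|x.2| == S1]].
Definition Bset (C : nat) (N : 'I_C -> nat) (n : 'I_C -> nat) : {set {set unit_t N}} :=
  [set W : {set unit_t N} | [forall c, #|[set u in W | tag u == c]| == n c]].

Lemma sum_design (R : realFieldType) C (N : 'I_C -> nat) S S1 n (F : outcome N -> R) :
  \sum_(w in design N S S1 n) F w =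
  \sum_(x in Aset C S S1) \sum_(W in Bset N n) F (x, W).
Proof.
rewrite pair_big_dep; apply: eq_big => [[x W]|[x W] _] //=.
by rewrite !inE /Rset /Dset /Wset /= !andbA.
Qed.

Definition EA (R : realFieldType) C S S1 (f : {set 'I_C} * {set 'I_C} -> R) :=
  (\sum_(x in Aset C S S1) f x) / #|Aset C S S1|%:R.
Definition EB (R : realFieldType) C (N : 'I_C -> nat) n (g : {set unit_t N} -> R) :=
  (\sum_(W in Bset N n) g W) / #|Bset N n|%:R.

Lemma card_design (R : realFieldType) C (N : 'I_C -> nat) S S1 n :
  #|design N S S1 n|%:R = #|Aset C S S1|%:R * #|Bset N n|%:R :> R.
Proof.
have := sum_design S S1 n (fun _ : outcome N => 1 : R).
rewrite !sumr_const => ->.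
by rewrite mulr_natl.
Qed.

Lemma Exp_prod (R : realFieldType) C (N : 'I_C -> nat) S S1 n f g :
  Exp S S1 n (fun w : outcome N => f w.1 * g w.2) = EA S S1 f * EB n g :> R.
Proof.
rewrite /Exp sum_design card_design /EA /EB invfM mulrACA; congr (_ * _).
rewrite big_distrl /=; apply: eq_bigr => x _; by rewrite big_distrr.
Qed.

Section ExpLin.
Lemma Exp_ext (R : realFieldType) C (N : 'I_C -> nat) S S1 n (X Y : outcome N -> R) :
  (forall w, w \in design N S S1 n -> X w = Y w) -> Exp S S1 n X = Exp S S1 n Y.
Proof. by move=> h; rewrite /Exp; congr (_ / _); apply: eq_bigr. Qed.

Lemma Exp_add (R : realFieldType) C (N : 'I_C -> nat) S S1 n (X Y : outcome N -> R) :
  Exp S S1 n (fun w => X w + Y w) = Exp S S1 n X + Exp S S1 n Y.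
Proof. by rewrite /Exp big_split mulrDl. Qed.

Lemma Exp_sub (R : realFieldType) C (N : 'I_C -> nat) S S1 n (X Y : outcome N -> R) :
  Exp S S1 n (fun w => X w - Y w) = Exp S S1 n X - Exp S S1 n Y.
Proof. by rewrite /Exp sumrB mulrBl. Qed.

Lemma Exp_scal (R : realFieldType) C (N : 'I_C -> nat) S S1 n k (X : outcome N -> R) :
  Exp S S1 n (fun w => k * X w) = k * Exp S S1 n X.
Proof. by rewrite /Exp -big_distrr mulrA. Qed.

Lemma Exp_sum (R : realFieldType) C (N : 'I_C -> nat) S S1 n (X : 'I_C -> outcome N -> R) :
  Exp S S1 n (fun w => \sum_(c < C) X c w) = \sum_(c < C) Exp S S1 n (X c).
Proof. by rewrite /Exp exchange_big /= big_distrl. Qed.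

Lemma Exp_const (R : realFieldType) C (N : 'I_C -> nat) S S1 n (k : R) :
  #|design N S S1 n| != 0%N -> Exp S S1 n (fun _ : outcome N => k) = k.
Proof.
move=> h; rewrite /Exp sumr_const -[k *+ _]mulr_natl mulrAC divff ?mul1r //.
by rewrite pnatr_eq0.
Qed.

Lemma Var_eq (R : realFieldType) C (N : 'I_C -> nat) S S1 n (X : outcome N -> R) :
  #|design N S S1 n| != 0%N ->
  Var S S1 n X = Exp S S1 n (fun w => X w ^+ 2) - (Exp S S1 n X) ^+ 2.
Proof.
move=> h; rewrite /Var.
set m := Exp S S1 n X.
rewrite (Exp_ext (Y := fun w => (X w ^+ 2 - (2 * m) * X w) + m ^+ 2)); last first.
  by move=> w _; ring.
rewrite Exp_add Exp_sub Exp_scal Exp_const //; rewrite -/m; ring.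
Qed.
End ExpLin.

Definition actA C (c c' : 'I_C) (x : {set 'I_C} * {set 'I_C}) :=
  (tperm c c' @^-1: x.1, tperm c c' @^-1: x.2).

Lemma actA_inv C (c c' : 'I_C) : involutive (actA c c').
Proof.
case=> r d; rewrite /actA /=; congr pair; apply/setP => t; by rewrite !inE tpermK.
Qed.

Lemma actA_A C S S1 (c c' : 'I_C) x : (actA c c' x \in Aset C S S1) = (x \in Aset C S S1).
Proof.
case: x => r d; rewrite /actA !inE /= !card_preimset; try exact: perm_inj.
congr [&& _, _ & _].
have ff (A : {set 'I_C}) : tperm c c' @^-1: (tperm c c' @^-1: A) = A.
  by apply/setP => t; rewrite !in_set tpermK.
apply/idP/idP => H; last exact: preimsetS.
by rewrite -(ff d) -(ff r); apply: preimsetS.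
Qed.

Lemma sum_all_but (R : realFieldType) C (c' : 'I_C) (u : 'I_C -> R) :
  \sum_(c | c != c') u c = \sum_c u c - u c'.
Proof. by rewrite [X in _ = X - _](bigD1 c') //= addrAC subrr add0r. Qed.

Lemma sum_const_ord (R : realFieldType) C (k : R) : \sum_(c < C) k = C%:R * k.
Proof. by rewrite sumr_const card_ord mulr_natl. Qed.

Lemma sum_all_but_const (R : realFieldType) C (c' : 'I_C) (k : R) :
  \sum_(c | c != c') k = (C%:R - 1) * k.
Proof. by rewrite sum_all_but sumr_const card_ord mulrBl mul1r mulr_natl. Qed.

Lemma sum_const_in (R : realFieldType) (T : finType) (A : {pred T}) (k : R) :
  \sum_(x in A) k = #|A|%:R * k.
Proof. by rewrite sumr_const mulr_natl. Qed.

Lemma A_m1 (R : realFieldType) C S S1 (phi : bool -> bool -> R) (k : R) (c : 'I_C) :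
  (forall x, x \in Aset C S S1 -> \sum_c' phi (c' \in x.1) (c' \in x.2) = k) ->
  C%:R * \sum_(x in Aset C S S1) phi (c \in x.1) (c \in x.2) = #|Aset C S S1|%:R * k.
Proof.
move=> hk.
have E c' : \sum_(x in Aset C S S1) phi (c \in x.1) (c \in x.2) =
            \sum_(x in Aset C S S1) phi (c' \in x.1) (c' \in x.2).
  apply: (sum_invol (h := actA c c')) => [|x|x _]; first exact: actA_inv.
    exact: actA_A.
  by rewrite /actA /= !inE tpermL.
rewrite -sum_const_ord.
rewrite (eq_bigr _ (fun c' _ => E c')) exchange_big /=.
rewrite -sum_const_in; apply: eq_big => // x hx; exact: hk.
Qed.

Lemma A_m2 (R : realFieldType) C S S1 (phi psi : bool -> bool -> R) (k : R) (c c' : 'I_C) :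
  c != c' ->
  (forall x, x \in Aset C S S1 ->
     \sum_(c'' | c'' != c') phi (c'' \in x.1) (c'' \in x.2) * psi (c' \in x.1) (c' \in x.2)
     = k * psi (c' \in x.1) (c' \in x.2)) ->
  (C%:R - 1) * \sum_(x in Aset C S S1) phi (c \in x.1) (c \in x.2) * psi (c' \in x.1) (c' \in x.2)
  = k * \sum_(x in Aset C S S1) psi (c' \in x.1) (c' \in x.2).
Proof.
move=> hcc' hk.
have E c'' : c'' != c' -> \sum_(x in Aset C S S1) phi (c \in x.1) (c \in x.2) * psi (c' \in x.1) (c' \in x.2) =
            \sum_(x in Aset C S S1) phi (c'' \in x.1) (c'' \in x.2) * psi (c' \in x.1) (c' \in x.2).
  move=> hc''.
  apply: (sum_invol (h := actA c c'')) => [|x|x _]; first exact: actA_inv.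
    exact: actA_A.
  by rewrite /actA /= !inE tpermL (tpermD hcc' hc'').
rewrite -(sum_all_but_const c') (eq_bigr _ E) exchange_big /= big_distrr /=.
by apply: eq_big => // x hx; exact: hk.
Qed.

Lemma widen_inj m k (h : (m <= k)%N) : injective (widen_ord h).
Proof. by move=> i j /(congr1 val) /= /val_inj. Qed.

Lemma Aset_nonempty C S S1 : (S1 <= S)%N -> (S <= C)%N -> #|Aset C S S1| != 0%N.
Proof.
move=> h1 h2.
have h3 : (S1 <= C)%N by apply: leq_trans h2.
set r := [set widen_ord h2 i | i in 'I_S].
set d := [set widen_ord h3 i | i in 'I_S1].
apply/eqP => /eqP; rewrite -leqn0 leqNgt => /negP; apply.
apply/card_gt0P; exists (r, d).
rewrite inE /= /r /d !card_imset ?card_ord; try exact: widen_inj.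
rewrite !eqxx andbT /=.
apply/subsetP => t /imsetP [j _ ->]; apply/imsetP.
exists (widen_ord h1 j) => //; exact: val_inj.
Qed.

Definition Dm (R : realFieldType) C (c : 'I_C) (x : {set 'I_C} * {set 'I_C}) : R :=
  ind R (c \in x.2).
Definition Zm (R : realFieldType) C (c : 'I_C) (x : {set 'I_C} * {set 'I_C}) : R :=
  ind R (c \in x.1) * (1 - ind R (c \in x.2)).

Lemma sumD_A (R : realFieldType) C S S1 x : x \in Aset C S S1 ->
  \sum_c ind R (c \in x.2) = S1%:R.
Proof. by rewrite inE => /and3P [_ _ /eqP <-]; rewrite ind_sum. Qed.

Lemma sumZ_A (R : realFieldType) C S S1 x : x \in Aset C S S1 ->
  \sum_c ind R (c \in x.1) * (1 - ind R (c \in x.2)) = S%:R - S1%:R.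
Proof.
move=> hx; have := hx; rewrite inE => /and3P [/eqP h1 /subsetP hs /eqP h2].
rewrite (eq_bigr (fun c => ind R (c \in x.1) - ind R (c \in x.2))).
  by rewrite sumrB !ind_sum h1 h2.
move=> c _; rewrite /ind; case hc: (c \in x.2).
  by rewrite (hs _ hc) /=; ring.
by case: (c \in x.1) => /=; ring.
Qed.

Lemma EA_val (R : realFieldType) C S S1 (phi : bool -> bool -> R) k c :
  #|Aset C S S1| != 0%N -> C%:R != 0 :> R ->
  (forall x, x \in Aset C S S1 -> \sum_c' phi (c' \in x.1) (c' \in x.2) = k) ->
  EA S S1 (fun x : {set 'I_C} * {set 'I_C} => phi (c \in x.1) (c \in x.2)) = k / C%:R.
Proof.
move=> hA hC hk; have := A_m1 c hk; rewrite /EA => E.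
have hA' : #|Aset C S S1|%:R != 0 :> R by rewrite pnatr_eq0.
apply: (mulfI hC); rewrite mulrA E; field; by apply/andP.
Qed.

Lemma EA_val2 (R : realFieldType) C S S1 (phi psi : bool -> bool -> R) k k' c c' :
  #|Aset C S S1| != 0%N -> C%:R != 0 :> R -> C%:R - 1 != 0 :> R -> c != c' ->
  (forall x, x \in Aset C S S1 -> \sum_c' psi (c' \in x.1) (c' \in x.2) = k') ->
  (forall x, x \in Aset C S S1 ->
     \sum_(c'' | c'' != c') phi (c'' \in x.1) (c'' \in x.2) * psi (c' \in x.1) (c' \in x.2)
     = k * psi (c' \in x.1) (c' \in x.2)) ->
  EA S S1 (fun x : {set 'I_C} * {set 'I_C} => phi (c \in x.1) (c \in x.2) * psi (c' \in x.1) (c' \in x.2))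
  = k * k' / (C%:R * (C%:R - 1)).
Proof.
move=> hA hC hC1 hcc' hk' hk.
have E := A_m2 hcc' hk.
have E1 := A_m1 c' hk'.
rewrite /EA.
have hA' : #|Aset C S S1|%:R != 0 :> R by rewrite pnatr_eq0.
apply: (mulfI hC1); rewrite mulrA E.
have Es : \sum_(x in Aset C S S1) psi (c' \in x.1) (c' \in x.2) = #|Aset C S S1|%:R * k' / C%:R.
  by rewrite -E1; field.
rewrite Es; field; by rewrite hC hC1 hA'.
Qed.

Lemma EA_ext (R : realFieldType) C S S1 (f g : {set 'I_C} * {set 'I_C} -> R) :
  (forall x, f x = g x) -> EA S S1 f = EA S S1 g.
Proof. by move=> h; rewrite /EA; congr (_ / _); apply: eq_bigr => x _; apply: h. Qed.

Definition kap (R : realFieldType) (C : nat) (a b : R) : R := a * b / (C%:R * (C%:R - 1)).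

Lemma hA_ C S S1 (hS1 : (0 < S1)%N) (hSS : (S1 < S)%N) (hSC : (S <= C)%N) :
  #|Aset C S S1| != 0%N.
Proof. by apply: Aset_nonempty => //; apply: ltnW. Qed.
Lemma hC_ (R : realFieldType) C S S1 (hS1 : (0 < S1)%N) (hSS : (S1 < S)%N) (hSC : (S <= C)%N) :
  C%:R != 0 :> R.
Proof. rewrite pnatr_eq0 -lt0n; apply: leq_trans hSC; exact: leq_trans hSS. Qed.
Lemma hC1_ (R : realFieldType) C S S1 (hS1 : (0 < S1)%N) (hSS : (S1 < S)%N) (hSC : (S <= C)%N) :
  C%:R - 1 != 0 :> R.
Proof.
rewrite subr_eq0 pnatr_eq1.
have : (1 < C)%N by apply: leq_trans hSC; exact: leq_ltn_trans hSS.
by case: C {hSC} => [|[|m]].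
Qed.

Lemma sumb (R : realFieldType) C (c' : 'I_C) (u : 'I_C -> R) (k : R) :
  \sum_c u c = k -> \sum_(c'' | c'' != c') u c'' = k - u c'.
Proof. by move=> h; rewrite sum_all_but h. Qed.

Lemma EA_D (R : realFieldType) C S S1 (hS1 : (0 < S1)%N) (hSS : (S1 < S)%N) (hSC : (S <= C)%N) (c : 'I_C) : EA S S1 (Dm R c) = S1%:R / C%:R.
Proof.
have hA := hA_ hS1 hSS hSC; have hC := hC_ R hS1 hSS hSC.
apply: (EA_val (phi := fun _ b => ind R b)) => // x hx /=.
by rewrite (sumD_A R hx).
Qed.

Lemma EA_Z (R : realFieldType) C S S1 (hS1 : (0 < S1)%N) (hSS : (S1 < S)%N) (hSC : (S <= C)%N) (c : 'I_C) : EA S S1 (Zm R c) = (S%:R - S1%:R) / C%:R.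
Proof.
have hA := hA_ hS1 hSS hSC; have hC := hC_ R hS1 hSS hSC.
apply: (EA_val (phi := fun a b => ind R a * (1 - ind R b))) => // x hx /=; by rewrite (sumZ_A R hx).
Qed.


Lemma EA_DD (R : realFieldType) C S S1 (hS1 : (0 < S1)%N) (hSS : (S1 < S)%N) (hSC : (S <= C)%N) (c c' : 'I_C) : EA S S1 (fun x => Dm R c x * Dm R c' x) =
  if c == c' then S1%:R / C%:R else kap C (S1%:R - 1) S1%:R.
Proof.
have hA := hA_ hS1 hSS hSC; have hC := hC_ R hS1 hSS hSC; have hC1 := hC1_ R hS1 hSS hSC.
case: eqP => [<-|/eqP hcc'].
  rewrite -(EA_D R hS1 hSS hSC c); apply: EA_ext => x; rewrite /Dm /ind; by case: (c \in x.2) => /=; ring.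
apply: (EA_val2 (phi := fun _ b => ind R b) (psi := fun _ b => ind R b)) => // x hx.
  by move=> /=; rewrite (sumD_A R hx).
rewrite -big_distrl /= (sumb c' (sumD_A R hx)) /ind; by case: (c' \in x.2) => /=; ring.
Qed.

Lemma EA_DZ (R : realFieldType) C S S1 (hS1 : (0 < S1)%N) (hSS : (S1 < S)%N) (hSC : (S <= C)%N) (c c' : 'I_C) : EA S S1 (fun x => Dm R c x * Zm R c' x) =
  if c == c' then 0 else kap C S1%:R (S%:R - S1%:R).
Proof.
have hA := hA_ hS1 hSS hSC; have hC := hC_ R hS1 hSS hSC; have hC1 := hC1_ R hS1 hSS hSC.
case: eqP => [<-|/eqP hcc'].
  rewrite /EA big1 ?mul0r // => x _; rewrite /Dm /Zm /ind; by case: (c \in x.2) => /=; ring.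
apply: (EA_val2 (phi := fun _ b => ind R b) (psi := fun a b => ind R a * (1 - ind R b))) => // x hx.
  by move=> /=; rewrite (sumZ_A R hx).
rewrite -big_distrl /= (sumb c' (sumD_A R hx)) /ind; by case: (c' \in x.2) => /=; ring.
Qed.

Lemma EA_ZD (R : realFieldType) C S S1 (hS1 : (0 < S1)%N) (hSS : (S1 < S)%N) (hSC : (S <= C)%N) (c c' : 'I_C) : EA S S1 (fun x => Zm R c x * Dm R c' x) =
  if c == c' then 0 else kap C (S%:R - S1%:R) S1%:R.
Proof.
have hA := hA_ hS1 hSS hSC; have hC := hC_ R hS1 hSS hSC; have hC1 := hC1_ R hS1 hSS hSC.
case: eqP => [<-|/eqP hcc'].
  rewrite /EA big1 ?mul0r // => x _; rewrite /Dm /Zm /ind; by case: (c \in x.2) => /=; ring.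
apply: (EA_val2 (phi := fun a b => ind R a * (1 - ind R b)) (psi := fun _ b => ind R b)) => // x hx.
  by move=> /=; rewrite (sumD_A R hx).
rewrite -big_distrl /= (sumb c' (sumZ_A R hx)) /ind; by case: (c' \in x.2); case: (c' \in x.1) => /=; ring.
Qed.

Lemma EA_ZZ (R : realFieldType) C S S1 (hS1 : (0 < S1)%N) (hSS : (S1 < S)%N) (hSC : (S <= C)%N) (c c' : 'I_C) : EA S S1 (fun x => Zm R c x * Zm R c' x) =
  if c == c' then (S%:R - S1%:R) / C%:R else kap C (S%:R - S1%:R - 1) (S%:R - S1%:R).
Proof.
have hA := hA_ hS1 hSS hSC; have hC := hC_ R hS1 hSS hSC; have hC1 := hC1_ R hS1 hSS hSC.
case: eqP => [<-|/eqP hcc'].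
  rewrite -(EA_Z R hS1 hSS hSC c); apply: EA_ext => x; rewrite /Zm /ind.
  by case: (c \in x.2); case: (c \in x.1) => /=; ring.
apply: (EA_val2 (phi := fun a b => ind R a * (1 - ind R b)) (psi := fun a b => ind R a * (1 - ind R b))) => // x hx.
  by move=> /=; rewrite (sumZ_A R hx).
rewrite -big_distrl /= (sumb c' (sumZ_A R hx)) /ind; by case: (c' \in x.2); case: (c' \in x.1) => /=; ring.
Qed.


Definition actB C (N : 'I_C -> nat) (u v : unit_t N) (W : {set unit_t N}) := tperm u v @^-1: W.

Lemma tag_tperm C (N : 'I_C -> nat) (u v t : unit_t N) : tag u = tag v -> tag (tperm u v t) = tag t.
Proof. by move=> huv; case: tpermP => [->|->|]. Qed.

Lemma actB_inv C (N : 'I_C -> nat) (u v : unit_t N) : involutive (actB u v).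
Proof. by move=> W; apply/setP => t; rewrite /actB !in_set tpermK. Qed.

Lemma actB_B C (N : 'I_C -> nat) n (u v : unit_t N) W : tag u = tag v ->
  (actB u v W \in Bset N n) = (W \in Bset N n).
Proof.
move=> huv; rewrite !inE; apply: eq_forallb => c.
have -> : [set t in actB u v W | tag t == c] = tperm u v @^-1: [set t in W | tag t == c].
  by apply/setP => t; rewrite /actB !in_set tag_tperm.
by rewrite card_preimset //; exact: perm_inj.
Qed.

Lemma unit_of_inj C (N : 'I_C -> nat) (c : 'I_C) : injective (@unit_of C N c).
Proof.
move=> i j /(congr1 (tagged_as (unit_of i))).
by rewrite /unit_of !tagged_asE.
Qed.

Lemma card_clus C (N : 'I_C -> nat) (W : {set unit_t N}) (c : 'I_C) :
  #|[set u in W | tag u == c]| = #|[set i : 'I_(N c) | unit_of i \in W]|.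
Proof.
rewrite -[RHS](card_imset _ (@unit_of_inj C N c)); apply: eq_card => u.
rewrite !inE; apply/andP/imsetP.
  case: u => c' i' /= [uW /eqP tu]; subst c'; exists i' => //; by rewrite inE.
by case=> i; rewrite inE => Hi ->; split => //=.
Qed.

Lemma sum_units (R : realFieldType) C (N : 'I_C -> nat) n W (c : 'I_C) : W \in Bset N n ->
  \sum_(i < N c) ind R (unit_of i \in W) = (n c)%:R.
Proof.
rewrite inE => /forallP /(_ c) /eqP; rewrite card_clus => <-.
by rewrite -ind_sum; apply: eq_bigr => i _; rewrite inE.
Qed.

Lemma card_lt m k (h : (k <= m)%N) : #|[set i : 'I_m | (i < k)%N]| = k.
Proof.
have -> : [set i : 'I_m | (i < k)%N] = [set widen_ord h j | j in 'I_k].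
  apply/setP => i; rewrite inE; apply/idP/imsetP => [hi | [j _ ->]].
    by exists (Ordinal hi) => //; apply: val_inj.
  exact: (ltn_ord j).
by rewrite card_imset ?card_ord //; exact: widen_inj.
Qed.

Lemma Bset_nonempty C (N : 'I_C -> nat) n : (forall c, (n c <= N c)%N) -> #|Bset N n| != 0%N.
Proof.
move=> hn.
apply/eqP => /eqP; rewrite -leqn0 leqNgt => /negP; apply.
apply/card_gt0P; exists [set u : unit_t N | (tagged u < n (tag u))%N].
rewrite inE; apply/forallP => c; rewrite card_clus.
rewrite (_ : [set i | _] = [set i : 'I_(N c) | (i < n c)%N]) ?card_lt //.
by apply/setP => i; rewrite !inE.
Qed.

Lemma B_sym1 (R : realFieldType) C (N : 'I_C -> nat) n (c : 'I_C) (i : 'I_(N c))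
  (h : {set unit_t N} -> R) :
  (forall (j : 'I_(N c)) W, h (actB (unit_of i) (unit_of j) W) = h W) ->
  (N c)%:R * \sum_(W in Bset N n) ind R (unit_of i \in W) * h W
  = (n c)%:R * \sum_(W in Bset N n) h W.
Proof.
move=> hinv.
have E (j : 'I_(N c)) : \sum_(W in Bset N n) ind R (unit_of i \in W) * h W
                      = \sum_(W in Bset N n) ind R (unit_of j \in W) * h W.
  apply: (sum_invol (h := actB (unit_of i) (unit_of j))) => [|W|W _].
  - exact: actB_inv.
  - exact: actB_B.
  - by rewrite hinv /actB in_set tpermL.
rewrite -[LHS]sum_const_ord (eq_bigr _ (fun j _ => E j)) exchange_big /= big_distrr /=.
apply: eq_big => // W hW; by rewrite -big_distrl /= (sum_units R c hW).
Qed.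

Lemma B_sym2 (R : realFieldType) C (N : 'I_C -> nat) n (c : 'I_C) (i j0 : 'I_(N c)) :
  i != j0 ->
  ((N c)%:R - 1) * \sum_(W in Bset N n) ind R (unit_of i \in W) * ind R (unit_of j0 \in W)
  = ((n c)%:R - 1) * \sum_(W in Bset N n) ind R (unit_of j0 \in W).
Proof.
move=> hij.
have E (i' : 'I_(N c)) : i' != j0 ->
    \sum_(W in Bset N n) ind R (unit_of i \in W) * ind R (unit_of j0 \in W)
  = \sum_(W in Bset N n) ind R (unit_of i' \in W) * ind R (unit_of j0 \in W).
  move=> hi'.
  apply: (sum_invol (h := actB (unit_of i) (unit_of i'))) => [|W|W _].
  - exact: actB_inv.
  - exact: actB_B.
  rewrite /actB !in_set tpermL tpermD //.
    by rewrite (inj_eq (@unit_of_inj C N c)).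
  by rewrite (inj_eq (@unit_of_inj C N c)).
rewrite -(sum_all_but_const j0) (eq_bigr _ E) exchange_big /= big_distrr /=.
apply: eq_big => // W hW; rewrite -big_distrl /= (sumb j0 (sum_units R c hW)) /ind.
by case: (unit_of j0 \in W) => /=; ring.
Qed.

Lemma EB_W (R : realFieldType) C (N : 'I_C -> nat) n (hN : forall c, (0 < N c)%N)
  (hn : forall c, (n c <= N c)%N) (c : 'I_C) (i : 'I_(N c)) :
  EB n (fun W => ind R (unit_of i \in W)) = pi_ R N n c.
Proof.
have := @B_sym1 R C N n c i (fun _ => 1) (fun _ _ => erefl).
have hB : #|Bset N n|%:R != 0 :> R by rewrite pnatr_eq0; exact: Bset_nonempty.
have hNc : (N c)%:R != 0 :> R by rewrite pnatr_eq0 -lt0n.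
rewrite (eq_bigr _ (fun W _ => mulr1 _)) sumr_const => E.
rewrite /EB /pi_; apply: (mulfI hNc); rewrite mulrA E; field; by apply/andP.
Qed.


Lemma EB_WW (R : realFieldType) C (N : 'I_C -> nat) n (hN : forall c, (0 < N c)%N)
  (hn : forall c, (n c <= N c)%N) (c : 'I_C) (i j : 'I_(N c)) : i != j ->
  EB n (fun W => ind R (unit_of i \in W) * ind R (unit_of j \in W)) = pi_ R N n c * pit_ R N n c.
Proof.
move=> hij.
have E := B_sym2 R n hij.
have E1 := EB_W R hN hn j.
have hB : #|Bset N n|%:R != 0 :> R by rewrite pnatr_eq0; exact: Bset_nonempty.
have hNc : (N c)%:R != 0 :> R by rewrite pnatr_eq0 -lt0n.
have h1 : (1 < N c)%N.
  have hi := ltn_ord i; have hj := ltn_ord j.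
  have : nat_of_ord i != nat_of_ord j by [].
  lia.
have hNc1 : (N c)%:R - 1 != 0 :> R by rewrite subr_eq0 pnatr_eq1; lia.
rewrite /EB /pi_ /pit_ in E1 *.
apply: (mulfI hNc1); rewrite mulrA E.
have Es : \sum_(W in Bset N n) ind R (unit_of j \in W) = (n c)%:R / (N c)%:R * #|Bset N n|%:R.
  by rewrite -E1; field.
rewrite Es; field; by rewrite hNc hNc1.
Qed.

Lemma EB_Wc (R : realFieldType) C (N : 'I_C -> nat) n (hN : forall c, (0 < N c)%N)
  (hn : forall c, (n c <= N c)%N) (c c' : 'I_C) (i : 'I_(N c)) (j : 'I_(N c')) : c != c' ->
  EB n (fun W => ind R (unit_of i \in W) * ind R (unit_of j \in W)) = pi_ R N n c * pi_ R N n c'.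
Proof.
move=> hcc'.
have hne (i' : 'I_(N c)) : unit_of i' != unit_of j.
  by apply/eqP => /(congr1 tag) /= /eqP; apply/negP.
have hinv (i' : 'I_(N c)) W : ind R (unit_of j \in actB (unit_of i) (unit_of i') W) = ind R (unit_of j \in W).
  by rewrite /actB in_set tpermD.
have E := @B_sym1 R C N n c i (fun W => ind R (unit_of j \in W)) hinv.
have E1 := EB_W R hN hn j.
have hB : #|Bset N n|%:R != 0 :> R by rewrite pnatr_eq0; exact: Bset_nonempty.
have hNc : (N c)%:R != 0 :> R by rewrite pnatr_eq0 -lt0n.
rewrite /EB /pi_ in E1 *.
apply: (mulfI hNc); rewrite mulrA E.
have Es : \sum_(W in Bset N n) ind R (unit_of j \in W) = (n c')%:R / (N c')%:R * #|Bset N n|%:R.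
  by rewrite -E1; field.
have hNc' : (N c')%:R != 0 :> R by rewrite pnatr_eq0 -lt0n.
rewrite Es; field; by rewrite ?hNc ?hNc' ?hB.
Qed.

Lemma EB_ext (R : realFieldType) C (N : 'I_C -> nat) n (f g : {set unit_t N} -> R) :
  (forall W, f W = g W) -> EB n f = EB n g.
Proof. by move=> h; rewrite /EB; congr (_ / _); apply: eq_bigr => x _; apply: h. Qed.

Lemma EB_add (R : realFieldType) C (N : 'I_C -> nat) n (f g : {set unit_t N} -> R) :
  EB n (fun W => f W + g W) = EB n f + EB n g.
Proof. by rewrite /EB big_split mulrDl. Qed.

Lemma EB_scalr (R : realFieldType) C (N : 'I_C -> nat) n (f : {set unit_t N} -> R) k :
  EB n (fun W => f W * k) = EB n f * k.
Proof. by rewrite /EB -big_distrl /= mulrAC. Qed.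

Lemma EB_sum (R : realFieldType) C (N : 'I_C -> nat) n m (f : 'I_m -> {set unit_t N} -> R) :
  EB n (fun W => \sum_(i < m) f i W) = \sum_(i < m) EB n (f i).
Proof. by rewrite /EB exchange_big /= big_distrl. Qed.

Definition lin (R : realFieldType) C (N : 'I_C -> nat) (c : 'I_C) (y : 'I_(N c) -> R)
  (W : {set unit_t N}) : R := \sum_(i < N c) ind R (unit_of i \in W) * y i.

Lemma EB_lin (R : realFieldType) C (N : 'I_C -> nat) n (hN : forall c, (0 < N c)%N)
  (hn : forall c, (n c <= N c)%N) (c : 'I_C) (y : 'I_(N c) -> R) :
  EB n (lin y) = pi_ R N n c * \sum_i y i.
Proof.
rewrite /lin EB_sum big_distrr /=; apply: eq_bigr => i _.
by rewrite EB_scalr (EB_W R hN hn i).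
Qed.

Lemma lin_mul (R : realFieldType) C (N : 'I_C -> nat) (c c' : 'I_C) (y : 'I_(N c) -> R)
  (z : 'I_(N c') -> R) W :
  lin y W * lin z W = \sum_i \sum_j
     (ind R (unit_of i \in W) * ind R (unit_of j \in W)) * (y i * z j).
Proof.
rewrite /lin big_distrl /=; apply: eq_bigr => i _; rewrite big_distrr /=.
apply: eq_bigr => j _; ring.
Qed.

Lemma sum_prod2 (R : realFieldType) m m' (u : 'I_m -> R) (v : 'I_m' -> R) :
  (\sum_i u i) * (\sum_j v j) = \sum_i \sum_j u i * v j.
Proof. by rewrite big_distrl /=; apply: eq_bigr => i _; rewrite big_distrr. Qed.

Lemma EB_lin_cross (R : realFieldType) C (N : 'I_C -> nat) n (hN : forall c, (0 < N c)%N)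
  (hn : forall c, (n c <= N c)%N) (c c' : 'I_C) (y : 'I_(N c) -> R) (z : 'I_(N c') -> R) :
  c != c' ->
  EB n (fun W => lin y W * lin z W) = (pi_ R N n c * \sum_i y i) * (pi_ R N n c' * \sum_j z j).
Proof.
move=> hcc'.
rewrite (EB_ext _ (fun W => lin_mul y z W)) EB_sum.
rewrite mulrACA sum_prod2 big_distrr /=; apply: eq_bigr => i _.
rewrite EB_sum big_distrr /=; apply: eq_bigr => j _.
by rewrite EB_scalr (EB_Wc R hN hn i j hcc'); ring.
Qed.

Lemma EB_lin_same (R : realFieldType) C (N : 'I_C -> nat) n (hN : forall c, (0 < N c)%N)
  (hn : forall c, (n c <= N c)%N) (c : 'I_C) (y z : 'I_(N c) -> R) :
  EB n (fun W => lin y W * lin z W) =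
    pi_ R N n c * \sum_i (y i * z i)
  + pi_ R N n c * pit_ R N n c * ((\sum_i y i) * (\sum_i z i) - \sum_i (y i * z i)).
Proof.
rewrite (EB_ext _ (fun W => lin_mul y z W)) EB_sum.
rewrite big_distrl /= -sumrB big_distrr /= big_distrr /= -big_split /=.
apply: eq_bigr => i _.
rewrite EB_sum (bigD1 i) //=.
rewrite EB_scalr (EB_ext _ (g := fun W => ind R (unit_of i \in W))); last first.
  by move=> W; rewrite /ind; case: (unit_of i \in W) => /=; ring.
rewrite (EB_W R hN hn i).
rewrite (eq_bigr (fun j => pi_ R N n c * pit_ R N n c * (y i * z j))); last first.
  by move=> j hj; rewrite EB_scalr (EB_WW R hN hn (i:=i) (j:=j)) // eq_sym.
rewrite -big_distrr /= (sum_all_but i) -big_distrr /=; ring.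
Qed.

Lemma sum_if_eq (R : realFieldType) C (c : 'I_C) (a : R) :
  \sum_(c' < C) (if c == c' then a else 0) = a.
Proof.
rewrite -big_mkcond /= (big_pred1 c) // => c'; by rewrite /= eq_sym.
Qed.

Lemma dsum (R : realFieldType) C (u v h : 'I_C -> R) (k1 k2 k3 : R) :
  \sum_c \sum_c' (k1 * (u c * u c') - k2 * (u c * v c' + v c * u c') + k3 * (v c * v c')
                 + (if c == c' then h c else 0))
  = k1 * (\sum_c u c) ^+ 2 - k2 * (2 * ((\sum_c u c) * (\sum_c v c))) + k3 * (\sum_c v c) ^+ 2
    + \sum_c h c.
Proof.
set su := \sum_c u c; set sv := \sum_c v c.
rewrite (eq_bigr (fun c => (k1 * u c) * su - (k2 * u c * sv + k2 * v c * su) + (k3 * v c) * sv + h c)).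
  rewrite !big_split /= ?sumrN ?big_split /= ?sumrN -!big_distrl -!big_distrr /= -/su -/sv.
  ring.
move=> c _.
rewrite !big_split /= ?sumrN ?big_split /= ?sumrN sum_if_eq -!big_distrr /= big_split /= -!big_distrr /= -/su -/sv.
ring.
Qed.

Lemma Exp_prod2 (R : realFieldType) C (N : 'I_C -> nat) S S1 n
  (a b : {set 'I_C} * {set 'I_C} -> R) (f g : {set unit_t N} -> R) :
  Exp S S1 n (fun w : outcome N => (a w.1 * b w.1) * (f w.2 * g w.2))
  = EA S S1 (fun x => a x * b x) * EB n (fun W => f W * g W).
Proof. exact: (Exp_prod S S1 n (fun x => a x * b x) (fun W => f W * g W)). Qed.

Lemma sq_sum (R : realFieldType) C (k : R) (a : 'I_C -> R) :
  (k * \sum_c a c) ^+ 2 = k ^+ 2 * \sum_c \sum_c' a c * a c'.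
Proof. by rewrite exprMn [(\sum_c a c) ^+ 2]expr2 sum_prod2. Qed.

Definition Tfun (R : realFieldType) C (N : 'I_C -> nat) (F G : 'I_C -> {set unit_t N} -> R)
  (w : outcome N) : R :=
  C%:R^-1 * \sum_c (Dm R c w.1 * F c w.2 - Zm R c w.1 * G c w.2).

Lemma core (R : realFieldType) C (N : 'I_C -> nat) S S1 n
  (hS1 : (0 < S1)%N) (hSS : (S1 < S)%N) (hSC : (S <= C)%N)
  (F G : 'I_C -> {set unit_t N} -> R) (f g vF vG : 'I_C -> R) :
  (forall c, EB n (F c) = f c) -> (forall c, EB n (G c) = g c) ->
  (forall c c', EB n (fun W => F c W * F c' W) = f c * f c' + (if c == c' then vF c else 0)) ->
  (forall c c', EB n (fun W => G c W * G c' W) = g c * g c' + (if c == c' then vG c else 0)) ->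
  (forall c c', c != c' -> EB n (fun W => F c W * G c' W) = f c * g c') ->
  Exp S S1 n (Tfun F G) =
    C%:R^-1 * (S1%:R / C%:R * \sum_c f c - (S%:R - S1%:R) / C%:R * \sum_c g c) /\
  Exp S S1 n (fun w => Tfun F G w ^+ 2) =
    C%:R^-1 ^+ 2 *
    (kap C (S1%:R - 1) S1%:R * (\sum_c f c) ^+ 2
     - kap C S1%:R (S%:R - S1%:R) * (2 * ((\sum_c f c) * (\sum_c g c)))
     + kap C (S%:R - S1%:R - 1) (S%:R - S1%:R) * (\sum_c g c) ^+ 2
     + \sum_c (S1%:R / C%:R * (f c * f c + vF c) + (S%:R - S1%:R) / C%:R * (g c * g c + vG c)
               - (kap C (S1%:R - 1) S1%:R * (f c * f c)
                  - kap C S1%:R (S%:R - S1%:R) * (f c * g c + g c * f c)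
                  + kap C (S%:R - S1%:R - 1) (S%:R - S1%:R) * (g c * g c)))).
Proof.
move=> hF hG hFF hGG hFG; split.
  rewrite /Tfun Exp_scal Exp_sum; congr (_ * _).
  rewrite (eq_bigr (fun c => S1%:R / C%:R * f c - (S%:R - S1%:R) / C%:R * g c)).
    by rewrite sumrB -!big_distrr.
  move=> c _; rewrite Exp_sub !Exp_prod.
  by rewrite (EA_D R hS1 hSS hSC) (EA_Z R hS1 hSS hSC) hF hG.
rewrite (Exp_ext (Y := fun w => C%:R^-1 ^+ 2 * \sum_c \sum_c'
   ((Dm R c w.1 * Dm R c' w.1) * (F c w.2 * F c' w.2)
  - (Dm R c w.1 * Zm R c' w.1) * (F c w.2 * G c' w.2)
  - (Zm R c w.1 * Dm R c' w.1) * (G c w.2 * F c' w.2)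
  + (Zm R c w.1 * Zm R c' w.1) * (G c w.2 * G c' w.2)))); last first.
  move=> w _; rewrite /Tfun sq_sum; congr (_ * _); apply: eq_bigr => c _.
  by apply: eq_bigr => c' _; ring.
rewrite Exp_scal Exp_sum; congr (_ * _).
rewrite -dsum; apply: eq_bigr => c _; rewrite Exp_sum; apply: eq_bigr => c' _.
rewrite Exp_add !Exp_sub !Exp_prod2.
rewrite (EA_DD R hS1 hSS hSC) (EA_DZ R hS1 hSS hSC) (EA_ZD R hS1 hSS hSC) (EA_ZZ R hS1 hSS hSC).
rewrite hFF hGG.
case: eqP => [<-|/eqP hcc'].
  by rewrite ?eqxx; ring.
rewrite ?(negbTE hcc') hFG //.
rewrite (EB_ext _ (g := fun W => F c' W * G c W)); last by move=> W; rewrite mulrC.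
rewrite hFG 1?eq_sym //; rewrite /kap; ring.
Qed.

Lemma sum_d (R : realFieldType) C (f g vF vG : 'I_C -> R) (A1 A0 k1 k2 k3 : R) :
  \sum_c (A1 * (f c * f c + vF c) + A0 * (g c * g c + vG c)
          - (k1 * (f c * f c) - k2 * (f c * g c + g c * f c) + k3 * (g c * g c)))
  = A1 * (\sum_c f c * f c + \sum_c vF c) + A0 * (\sum_c g c * g c + \sum_c vG c)
    - (k1 * \sum_c f c * f c - k2 * (2 * \sum_c f c * g c) + k3 * \sum_c g c * g c).
Proof.
rewrite (eq_bigr (fun c => A1 * (f c * f c) + A1 * vF c + (A0 * (g c * g c) + A0 * vG c)
   - (k1 * (f c * f c) - (k2 * 2) * (f c * g c) + k3 * (g c * g c)))); last by move=> c _; ring.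
rewrite !big_split /= ?sumrN ?big_split /= ?sumrN ?big_split /= ?sumrN -!big_distrr /=; ring.
Qed.

Lemma var_sum (R : realFieldType) C (u : 'I_C -> R) : C%:R != 0 :> R ->
  \sum_c (u c - (\sum_c' u c') / C%:R) ^+ 2 = \sum_c u c ^+ 2 - (\sum_c u c) ^+ 2 / C%:R.
Proof.
move=> hC; set m := (\sum_c' u c') / C%:R.
rewrite (eq_bigr (fun c => u c ^+ 2 + (- (2 * m)) * u c + m ^+ 2)); last by move=> c _; ring.
rewrite !big_split /= -big_distrr sum_const_ord /= /m; field; exact: hC.
Qed.

Lemma sum_scal (R : realFieldType) C (u : 'I_C -> R) k : \sum_c u c * k = (\sum_c u c) * k.
Proof. by rewrite big_distrl. Qed.

Lemma between (R : realFieldType) C S S1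
  (hS1 : (0 < S1)%N) (hSS : (S1 < S)%N) (hSC : (S <= C)%N) (a b : 'I_C -> R) :
  let P := p_ R C S * q_ R S S1 in let Q := p_ R C S * (1 - q_ R S S1) in
  let Sf := \sum_c a c / P in let Sg := \sum_c b c / Q in
  let Sff := \sum_c (a c / P) * (a c / P) in let Sgg := \sum_c (b c / Q) * (b c / Q) in
  let Sfg := \sum_c (a c / P) * (b c / Q) in
  C%:R^-1 ^+ 2 *
    (kap C (S1%:R - 1) S1%:R * Sf ^+ 2
     - kap C S1%:R (S%:R - S1%:R) * (2 * (Sf * Sg))
     + kap C (S%:R - S1%:R - 1) (S%:R - S1%:R) * Sg ^+ 2
     + (S1%:R / C%:R * Sff + (S%:R - S1%:R) / C%:R * Sgg
        - (kap C (S1%:R - 1) S1%:R * Sff - kap C S1%:R (S%:R - S1%:R) * (2 * Sfg)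
           + kap C (S%:R - S1%:R - 1) (S%:R - S1%:R) * Sgg)))
  - (C%:R^-1 * (S1%:R / C%:R * Sf - (S%:R - S1%:R) / C%:R * Sg)) ^+ 2
  = C%:R^-1 * (
      ((C%:R - 1)^-1 * \sum_c (a c - (\sum_c' a c') / C%:R) ^+ 2) / P
    + ((C%:R - 1)^-1 * \sum_c (b c - (\sum_c' b c') / C%:R) ^+ 2) / Q
    - (C%:R - 1)^-1 * \sum_c ((a c - b c) - (\sum_c' (a c' - b c')) / C%:R) ^+ 2).
Proof.
move=> P Q Sf Sg Sff Sgg Sfg.
have hC := hC_ R hS1 hSS hSC; have hC1 := hC1_ R hS1 hSS hSC.
rewrite !var_sum //.
have -> : Sf = (\sum_c a c) / P by rewrite /Sf sum_scal.
have -> : Sg = (\sum_c b c) / Q by rewrite /Sg sum_scal.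
have -> : Sff = (\sum_c a c ^+ 2) / P / P.
  by rewrite /Sff -!sum_scal; apply: eq_bigr => c _; ring.
have -> : Sgg = (\sum_c b c ^+ 2) / Q / Q.
  by rewrite /Sgg -!sum_scal; apply: eq_bigr => c _; ring.
have -> : Sfg = (\sum_c a c * b c) / P / Q.
  by rewrite /Sfg -!sum_scal; apply: eq_bigr => c _; ring.
have -> : \sum_c (a c - b c) ^+ 2 = \sum_c a c ^+ 2 - 2 * \sum_c a c * b c + \sum_c b c ^+ 2.
  rewrite (eq_bigr (fun c => a c ^+ 2 + (-2) * (a c * b c) + b c ^+ 2)); last by move=> c _; ring.
  by rewrite !big_split /= -big_distrr /=; ring.
rewrite sumrB.
set sa := \sum_c a c; set sb := \sum_c b c; set saa := \sum_c a c ^+ 2.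
set sbb := \sum_c b c ^+ 2; set sab := \sum_c a c * b c.
have hS : S%:R != 0 :> R by rewrite pnatr_eq0 -lt0n; exact: leq_ltn_trans hSS.
have hS1' : S1%:R != 0 :> R by rewrite pnatr_eq0 -lt0n.
have hS0 : S%:R - S1%:R != 0 :> R.
  by rewrite subr_eq0 eqr_nat; apply/eqP => E; move: hSS; rewrite E ltnn.
rewrite /P /Q /p_ /q_ /kap.
field.
by rewrite hC hC1 hS hS1' hS0.
Qed.

Lemma sum_one (R : realFieldType) m (i0 : 'I_m) (F : 'I_m -> R) : m = 1%N ->
  \sum_i F i = F i0.
Proof.
move=> hm; apply: (big_pred1 i0) => j /=; apply/esym/eqP/val_inj => /=.
have := ltn_ord j; have := ltn_ord i0; lia.
Qed.

Lemma cov_id (R : realFieldType) C (N : 'I_C -> nat) n (hN : forall c, (0 < N c)%N)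
  (hn : forall c, (n c <= N c)%N) (hn0 : forall c, (0 < n c)%N) (c : 'I_C)
  (u : 'I_(N c) -> R) (K : R) : K != 0 ->
  K * (EB n (fun W => lin (fun i => u i / pi_ R N n c / K) W * lin (fun i => u i / pi_ R N n c / K) W)
       - (\sum_i u i / K) * (\sum_i u i / K))
  = (1 - pi_ R N n c) * (1 - pit_ R N n c) / (pi_ R N n c * (pi_ R N n c - pit_ R N n c)) *
    (((N c)%:R - 1)^-1 * \sum_i (u i - (\sum_i u i) / (N c)%:R) ^+ 2) / K.
Proof.
move=> hK.
have hNc : (N c)%:R != 0 :> R by rewrite pnatr_eq0 -lt0n.
have hnc : (n c)%:R != 0 :> R by rewrite pnatr_eq0 -lt0n.
have hpi : pi_ R N n c != 0 by rewrite /pi_ mulf_neq0 ?invr_eq0.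
rewrite (EB_lin_same hN hn) var_sum //.
have -> : \sum_i (u i / pi_ R N n c / K * (u i / pi_ R N n c / K))
        = (\sum_i u i ^+ 2) / pi_ R N n c / pi_ R N n c / K / K.
  by rewrite -!sum_scal; apply: eq_bigr => i _; ring.
have -> : \sum_i u i / pi_ R N n c / K = (\sum_i u i) / pi_ R N n c / K.
  by rewrite -!sum_scal.
rewrite sum_scal.
set U1 := \sum_i u i; set U2 := \sum_i u i ^+ 2.
case: (ltngtP (n c) (N c)) => [hlt||heq]; last 2 first.
- by move=> h; move: (hn c); rewrite leqNgt h.
- case: (ltngtP 1 (N c)) => [h1||h1]; last 2 first.
  + by move=> h; move: (hN c); rewrite lt0n; lia.
  +
    have hN1 : N c = 1%N by [].
    have i0 : 'I_(N c) by rewrite hN1; exact: ord0.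
    have -> : U2 = U1 ^+ 2 by rewrite /U2 /U1 !(@sum_one R (N c) i0 _ hN1).
    have -> : pi_ R N n c = 1 by rewrite /pi_ heq divff.
    rewrite !divr1 subrr !mul0r; ring.
  + have -> : pi_ R N n c = 1 by rewrite /pi_ heq divff.
    have -> : pit_ R N n c = 1.
      rewrite /pit_ heq divff // subr_eq0 pnatr_eq1; lia.
    rewrite !subrr !mul0r; field; by rewrite hK.
have hN1 : (N c)%:R - 1 != 0 :> R by have := hn0 c; rewrite subr_eq0 pnatr_eq1; lia.
have hNn : (N c)%:R - (n c)%:R != 0 :> R.
  by rewrite subr_eq0 eqr_nat; apply/eqP => E; move: hlt; rewrite E ltnn.
have E : (n c)%:R * ((N c)%:R - 1) + - ((n c)%:R - 1) * (N c)%:R = (N c)%:R - (n c)%:R :> R.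
  by ring.
rewrite /pi_ /pit_; field.
by rewrite E hK hNc hN1 hNn hnc.
Qed.

Lemma Ntot_neq0 (R : realFieldType) C (N : 'I_C -> nat) (hN : forall c, (0 < N c)%N) :
  (0 < C)%N -> Ntot R N != 0.
Proof.
move=> hC; rewrite /Ntot -natr_sum pnatr_eq0 -lt0n.
rewrite (bigD1 (Ordinal hC)) //=; exact: ltn_addr.
Qed.

Lemma Ntot_inv (R : realFieldType) C (N : 'I_C -> nat) : C%:R != 0 :> R ->
  (Ntot R N)^-1 = C%:R^-1 * (Nbar R N)^-1.
Proof. by move=> hC; rewrite /Nbar invf_div mulrA mulVf // mul1r. Qed.

Lemma tau_eq (R : realFieldType) C (N : 'I_C -> nat) (hN : forall c, (0 < N c)%N)
  (Y1 Y0 : forall c : 'I_C, 'I_(N c) -> R) : C%:R != 0 :> R ->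
  tau Y1 Y0 = (\sum_c (YtC Y1 c - YtC Y0 c)) / C%:R.
Proof.
move=> hC.
have hC0 : (0 < C)%N by rewrite lt0n; apply/eqP => E; move: hC; rewrite E eqxx.
have hT := Ntot_neq0 R hN hC0.
rewrite /tau /YtC /Yt.
have -> : \sum_c (\sum_i Y1 c i / Nbar R N - \sum_i Y0 c i / Nbar R N)
        = (\sum_c \sum_(i < N c) (Y1 c i - Y0 c i)) / Nbar R N.
  rewrite -sum_scal; apply: eq_bigr => c _; rewrite !sum_scal -mulrBl sumrB //.
rewrite /Nbar; field; by rewrite hT hC.
Qed.

Definition F0 (R : realFieldType) C (N : 'I_C -> nat) (Y : forall c : 'I_C, 'I_(N c) -> R) (K : R)
  (c : 'I_C) (W : {set unit_t N}) : R := YtC Y c / K.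

Lemma taubar_T (R : realFieldType) C (N : 'I_C -> nat) S S1 n (Y1 Y0 : forall c : 'I_C, 'I_(N c) -> R)
  (w : outcome N) : w \in design N S S1 n ->
  taubar S S1 Y1 Y0 w =
  Tfun (F0 Y1 (p_ R C S * q_ R S S1)) (F0 Y0 (p_ R C S * (1 - q_ R S S1))) w.
Proof.
rewrite inE => /and4P [_ /subsetP hs _ _].
rewrite /taubar /Tfun; congr (_ * _); apply: eq_bigr => c _ /=.
rewrite /Dm /Zm /F0 /Rset /Dset.
case hd: (c \in w.1.2).
  by rewrite (hs _ hd) /ind /=; ring.
by case: (c \in w.1.1); rewrite /ind /=; ring.
Qed.

Definition F1 (R : realFieldType) C (N : 'I_C -> nat) (n : 'I_C -> nat) (Y : forall c : 'I_C, 'I_(N c) -> R) (K : R)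
  (c : 'I_C) (W : {set unit_t N}) : R := lin (c := c) (fun i : 'I_(N c) => @Yt R C N Y c i / pi_ R N n c / K) W.

Lemma tauhat_T (R : realFieldType) C (N : 'I_C -> nat) S S1 n (Y1 Y0 : forall c : 'I_C, 'I_(N c) -> R)
  (w : outcome N) : C%:R != 0 :> R -> w \in design N S S1 n ->
  tauhat S S1 n Y1 Y0 w =
  Tfun (F1 n Y1 (p_ R C S * q_ R S S1)) (F1 n Y0 (p_ R C S * (1 - q_ R S S1))) w.
Proof.
move=> hC; rewrite inE => /and4P [_ /subsetP hs _ _].
rewrite /tauhat /Tfun (Ntot_inv N hC) -mulrA; congr (_ * _).
rewrite mulrC -sum_scal; apply: eq_bigr => c _ /=.
rewrite /Dm /Zm /F1 /lin /Rset /Dset /Wset /Yt.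
set W := w.2.
set A1 := \sum_(i < N c) ind R (unit_of i \in W) * Y1 c i.
set A0 := \sum_(i < N c) ind R (unit_of i \in W) * Y0 c i.
have -> : \sum_(i < N c) ind R (unit_of i \in W) * (Y1 c i / Nbar R N / pi_ R N n c / (p_ R C S * q_ R S S1))
   = A1 / Nbar R N / pi_ R N n c / (p_ R C S * q_ R S S1).
  by rewrite /A1 -!sum_scal; apply: eq_bigr => i _; ring.
have -> : \sum_(i < N c) ind R (unit_of i \in W) * (Y0 c i / Nbar R N / pi_ R N n c / (p_ R C S * (1 - q_ R S S1)))
   = A0 / Nbar R N / pi_ R N n c / (p_ R C S * (1 - q_ R S S1)).
  by rewrite /A0 -!sum_scal; apply: eq_bigr => i _; ring.
case hd: (c \in w.1.2).
  rewrite (hs _ hd) /ind /=.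
  have -> : \sum_(i < N c) (1%:R : R) *+ (unit_of i \in W) * (1 * Y1 c i + (1 - 1) * Y0 c i) / pi_ R N n c
      = A1 / pi_ R N n c.
    by rewrite /A1 -!sum_scal; apply: eq_bigr => i _; rewrite /ind; ring.
  ring.
rewrite /ind /=.
have -> : \sum_(i < N c) (1%:R : R) *+ (unit_of i \in W) * (0 * Y1 c i + (1 - 0) * Y0 c i) / pi_ R N n c
    = A0 / pi_ R N n c.
  by rewrite /A0 -!sum_scal; apply: eq_bigr => i _; rewrite /ind; ring.
by case: (c \in w.1.1) => /=; ring.
Qed.

Lemma EB_const (R : realFieldType) C (N : 'I_C -> nat) n (k : R) :
  #|Bset N n| != 0%N -> EB n (fun _ : {set unit_t N} => k) = k.
Proof.
move=> h; rewrite /EB sumr_const -[k *+ _]mulr_natl mulrAC divff ?mul1r //.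
by rewrite pnatr_eq0.
Qed.

Lemma pi_sum (R : realFieldType) C (N : 'I_C -> nat) n (hN : forall c, (0 < N c)%N)
  (hn0 : forall c, (0 < n c)%N) (Y : forall c : 'I_C, 'I_(N c) -> R) (K : R) (c : 'I_C) :
  pi_ R N n c * \sum_(i < N c) (@Yt R C N Y c i / pi_ R N n c / K) = YtC Y c / K.
Proof.
have hNc : (N c)%:R != 0 :> R by rewrite pnatr_eq0 -lt0n.
have hnc : (n c)%:R != 0 :> R by rewrite pnatr_eq0 -lt0n.
have hpi : pi_ R N n c != 0 by rewrite /pi_ mulf_neq0 ?invr_eq0.
rewrite /YtC -sum_scal big_distrr /=; apply: eq_bigr => i _; have [->|hK] := eqVneq K 0; first by rewrite !invr0 !mulr0.
field; by rewrite hK hpi.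
Qed.

Lemma design_nonempty C (N : 'I_C -> nat) S S1 n (hn : forall c, (n c <= N c)%N)
  (hS1 : (0 < S1)%N) (hSS : (S1 < S)%N) (hSC : (S <= C)%N) : #|design N S S1 n| != 0%N.
Proof.
have := @card_design rat C N S S1 n.
have hA := hA_ hS1 hSS hSC; have hB := Bset_nonempty hn.
move=> E; rewrite -(pnatr_eq0 rat) E mulf_neq0 // pnatr_eq0 //.
Qed.

Lemma Var_ext (R : realFieldType) C (N : 'I_C -> nat) S S1 n (X Y : outcome N -> R) :
  (forall w, w \in design N S S1 n -> X w = Y w) -> Var S S1 n X = Var S S1 n Y.
Proof.
move=> h; rewrite /Var (Exp_ext h); apply: Exp_ext => w hw; by rewrite h.
Qed.

Unset Implicit Arguments.

Theorem proposition1 (R : realFieldType) (C : nat) (N : 'I_C -> nat)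
    (Y1 Y0 : forall c : 'I_C, 'I_(N c) -> R) (S S1 : nat) (n : 'I_C -> nat)
    (hN : forall c, (0 < N c)%N) (hn : forall c, (n c <= N c)%N)
    (hp : (0 < S <= C)%N) (hq : (0 < S1 < S)%N) :
  Exp S S1 n (taubar S S1 Y1 Y0) = tau Y1 Y0 /\
  Var S S1 n (taubar S S1 Y1 Y0) = var_taubar_formula S S1 Y1 Y0 /\
  ((forall c, (0 < n c)%N) ->
     Exp S S1 n (tauhat S S1 n Y1 Y0) = tau Y1 Y0 /\
     Var S S1 n (tauhat S S1 n Y1 Y0) =
       var_taubar_formula S S1 Y1 Y0 + within_term S S1 n Y1 Y0).
Proof.
case/andP: hp => _ hSC; case/andP: hq => hS1 hSS.
have hC := hC_ R hS1 hSS hSC; have hC1 := hC1_ R hS1 hSS hSC.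
have hD := design_nonempty hn hS1 hSS hSC.
have hB := Bset_nonempty hn.
have hS : S%:R != 0 :> R by rewrite pnatr_eq0 -lt0n; exact: leq_ltn_trans hSS.
have hS1' : S1%:R != 0 :> R by rewrite pnatr_eq0 -lt0n.
have hS0 : S%:R - S1%:R != 0 :> R.
  by rewrite subr_eq0 eqr_nat; apply/eqP => E; move: hSS; rewrite E ltnn.
have hP : S1%:R / C%:R = (p_ R C S * q_ R S S1) by rewrite /p_ /q_; field; rewrite hS hC.
have hQ : (S%:R - S1%:R) / C%:R = (p_ R C S * (1 - q_ R S S1)) by rewrite /p_ /q_; field; rewrite hS hC.
have hPne : (p_ R C S * q_ R S S1) != 0 by rewrite -hP mulf_neq0 ?invr_eq0.
have hQne : (p_ R C S * (1 - q_ R S S1)) != 0 by rewrite -hQ mulf_neq0 ?invr_eq0.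
have Etau : tau Y1 Y0 = (\sum_c (YtC Y1 c - YtC Y0 c)) / C%:R by apply: tau_eq.
have Emean : C%:R^-1 * (S1%:R / C%:R * \sum_c YtC Y1 c / (p_ R C S * q_ R S S1) - (S%:R - S1%:R) / C%:R * \sum_c YtC Y0 c / (p_ R C S * (1 - q_ R S S1)))
   = tau Y1 Y0.
  rewrite Etau !sum_scal sumrB /p_ /q_; field; by rewrite hC hS hS0 hS1'.
have regroup (A K1 K2 K3 Sf Sg a b sff sgg sfg vf vg M : R) :
  A * (K1 * Sf ^+ 2 - K2 * (2 * (Sf * Sg)) + K3 * Sg ^+ 2
       + (a * (sff + vf) + b * (sgg + vg) - (K1 * sff - K2 * (2 * sfg) + K3 * sgg))) - M
  = (A * (K1 * Sf ^+ 2 - K2 * (2 * (Sf * Sg)) + K3 * Sg ^+ 2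
       + (a * sff + b * sgg - (K1 * sff - K2 * (2 * sfg) + K3 * sgg))) - M)
    + A * (a * vf + b * vg).
  by ring.
have B := @between R C S S1 hS1 hSS hSC (YtC Y1) (YtC Y0).
cbv zeta in B.
have core0 := @core R C N S S1 n hS1 hSS hSC (F0 Y1 (p_ R C S * q_ R S S1)) (F0 Y0 (p_ R C S * (1 - q_ R S S1)))
  (fun c => YtC Y1 c / (p_ R C S * q_ R S S1)) (fun c => YtC Y0 c / (p_ R C S * (1 - q_ R S S1))) (fun _ => 0) (fun _ => 0)
  (fun c => ltac:(by rewrite /F0 EB_const)) (fun c => ltac:(by rewrite /F0 EB_const))
  (fun c c' => ltac:(rewrite /F0 EB_const //; by case: (c == c'); rewrite addr0))
  (fun c c' => ltac:(rewrite /F0 EB_const //; by case: (c == c'); rewrite addr0))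
  (fun c c' _ => ltac:(rewrite /F0 EB_const //)).
case: core0 => core0a core0b.
have Z : \sum_(c < C) (0 : R) = 0 by rewrite big1_eq.
split.
  by rewrite (Exp_ext (fun w hw => taubar_T Y1 Y0 hw)) core0a Emean.
split.
  rewrite (Var_ext (fun w hw => taubar_T Y1 Y0 hw)) Var_eq // core0b core0a sum_d /=.
  rewrite regroup Z !mulr0 !addr0 /var_taubar_formula Etau.
  by rewrite mulr0 addr0; exact: B.
move=> hn0.
pose vF := fun c => EB n (fun W => F1 n Y1 (p_ R C S * q_ R S S1) c W * F1 n Y1 (p_ R C S * q_ R S S1) c W) - YtC Y1 c / (p_ R C S * q_ R S S1) * (YtC Y1 c / (p_ R C S * q_ R S S1)).
pose vG := fun c => EB n (fun W => F1 n Y0 (p_ R C S * (1 - q_ R S S1)) c W * F1 n Y0 (p_ R C S * (1 - q_ R S S1)) c W) - YtC Y0 c / (p_ R C S * (1 - q_ R S S1)) * (YtC Y0 c / (p_ R C S * (1 - q_ R S S1))).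
have hF1 (Y : forall c : 'I_C, 'I_(N c) -> R) (K : R) c : EB n (F1 n Y K c) = YtC Y c / K.
  by rewrite /F1 (EB_lin hN hn) pi_sum.
have hF1x (Y Y' : forall c : 'I_C, 'I_(N c) -> R) (K K' : R) c c' : c != c' ->
    EB n (fun W => F1 n Y K c W * F1 n Y' K' c' W) = YtC Y c / K * (YtC Y' c' / K').
  by move=> ne; rewrite /F1 (EB_lin_cross hN hn _ _ ne) !pi_sum.
have hFF c c' : EB n (fun W => F1 n Y1 (p_ R C S * q_ R S S1) c W * F1 n Y1 (p_ R C S * q_ R S S1) c' W)
    = YtC Y1 c / (p_ R C S * q_ R S S1) * (YtC Y1 c' / (p_ R C S * q_ R S S1)) + (if c == c' then vF c else 0).
  case: (eqVneq c c') => [<-|ne]; first by rewrite /vF; ring.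
  by rewrite addr0; apply: hF1x.
have hGG c c' : EB n (fun W => F1 n Y0 (p_ R C S * (1 - q_ R S S1)) c W * F1 n Y0 (p_ R C S * (1 - q_ R S S1)) c' W)
    = YtC Y0 c / (p_ R C S * (1 - q_ R S S1)) * (YtC Y0 c' / (p_ R C S * (1 - q_ R S S1))) + (if c == c' then vG c else 0).
  case: (eqVneq c c') => [<-|ne]; first by rewrite /vG; ring.
  by rewrite addr0; apply: hF1x.
have core1 := @core R C N S S1 n hS1 hSS hSC (F1 n Y1 (p_ R C S * q_ R S S1)) (F1 n Y0 (p_ R C S * (1 - q_ R S S1)))
  (fun c => YtC Y1 c / (p_ R C S * q_ R S S1)) (fun c => YtC Y0 c / (p_ R C S * (1 - q_ R S S1))) vF vG
  (fun c => hF1 Y1 (p_ R C S * q_ R S S1) c) (fun c => hF1 Y0 (p_ R C S * (1 - q_ R S S1)) c) hFF hGG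
  (fun c c' ne => hF1x Y1 Y0 (p_ R C S * q_ R S S1) (p_ R C S * (1 - q_ R S S1)) c c' ne).
case: core1 => core1a core1b.
split.
  by rewrite (Exp_ext (fun w hw => tauhat_T Y1 Y0 hC hw)) core1a Emean.
rewrite (Var_ext (fun w hw => tauhat_T Y1 Y0 hC hw)) Var_eq // core1b core1a sum_d /=.
rewrite regroup /var_taubar_formula Etau; congr (_ + _); first exact: B.
rewrite /within_term exprVn; congr (_ * _).
rewrite hP hQ !big_distrr -big_split; apply: eq_bigr => c _ /=.
have c1 : (p_ R C S * q_ R S S1) * vF c = (1 - pi_ R N n c) * (1 - pit_ R N n c) / (pi_ R N n c * (pi_ R N n c - pit_ R N n c)) *
    (((N c)%:R - 1)^-1 * \sum_(i < N c) (@Yt R C N Y1 c i - YtCbar Y1 c) ^+ 2) / (p_ R C S * q_ R S S1).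
  rewrite /vF (_ : YtC Y1 c / (p_ R C S * q_ R S S1) = \sum_(i < N c) @Yt R C N Y1 c i / (p_ R C S * q_ R S S1)); last first.
  by rewrite /YtC big_distrl.
  exact: cov_id.
have c0 : (p_ R C S * (1 - q_ R S S1)) * vG c = (1 - pi_ R N n c) * (1 - pit_ R N n c) / (pi_ R N n c * (pi_ R N n c - pit_ R N n c)) *
    (((N c)%:R - 1)^-1 * \sum_(i < N c) (@Yt R C N Y0 c i - YtCbar Y0 c) ^+ 2) / (p_ R C S * (1 - q_ R S S1)).
  rewrite /vG (_ : YtC Y0 c / (p_ R C S * (1 - q_ R S S1)) = \sum_(i < N c) @Yt R C N Y0 c i / (p_ R C S * (1 - q_ R S S1))); last by rewrite /YtC big_distrl.
  exact: cov_id.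
rewrite c1 c0; ring.
Qed.
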